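(* Let $(X,G)$ be a $G$-system with metric $d$ of diameter $\rho$, and let $\zeta\in\mathcal A[0,\rho]$ with $k_m(\zeta)>0$ and $k_M(\zeta)>0$. Set $\zeta_d(x,y)=\zeta(d(x,y))$. Then (i) $\underline{\mathrm{mdim}}_{\mathrm M}(X,G,d)\ge k_m(\zeta)\,\underline{\mathrm{mdim}}_{\mathrm M}(X,G,\zeta_d)$; (ii) $\overline{\mathrm{mdim}}_{\mathrm M}(X,G,d)\le k_M(\zeta)\,\overline{\mathrm{mdim}}_{\mathrm M}(X,G,\zeta_d)$.
   Context: $G$ is a countable discrete amenable group; a $G$-system is a compact metric space with a continuous $G$-action. $\mathcal A[0,\rho]$ is the set of continuous, increasing, subadditive functions $\zeta:[0,\rho]\to[0,\infty)$ with $\zeta^{-1}(0)=\{0\}$; $k_m(\zeta)=\liminf_{\varepsilon\to0^+}\frac{\log\zeta(\varepsilon)}{\log\varepsilon}$, $k_M(\zeta)=\limsup_{\varepsilon\to0^+}\frac{\log\zeta(\varepsilon)}{\log\varepsilon}$. For a Følner sequence $(F_n)$ and metric $\rho'$, $\rho'_F(x,y)=\max_{g\in F}\rho'(gx,gy)$, $s_F(\rho',\varepsilon,X)$ is the maximal cardinality of a subset whose distinct points have $\rho'_F$-distance $>\varepsilon$; $\overline{\mathrm{mdim}}_{\mathrm M}(X,G,\rho')=\limsup_{\varepsilon\to0}\frac1{|\log\varepsilon|}\limsup_n\frac1{|F_n|}\log s_{F_n}(\rho',\varepsilon,X)$ and $\underline{\mathrm{mdim}}_{\mathrm M}$ the same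 with $\liminf_{\varepsilon\to0}$ (equivalently with minimal spanning-set cardinalities; independent of the Følner sequence). *)

(* Defs.v *)
From Stdlib Require List.
From HB Require Import structures.
From mathcomp Require Import all_boot all_order all_algebra.
From mathcomp Require Import finmap.
From mathcomp Require Import all_classical all_reals all_analysis.
Set Implicit Arguments. Unset Strict Implicit. Unset Printing Implicit Defensive.
Import Order.TTheory GRing.Theory Num.Theory numFieldNormedType.Exports.
Local Open Scope classical_set_scope.
Local Open Scope ring_scope.

Definition is_group (G : Type) (mul : G -> G -> G) (e : G) (inv : G -> G) : Prop :=
  (forall a b c, mul a (mul b c) = mul (mul a b) c) /\
  (forall a, mul e a = a) /\ (forall a, mul a e = a) /\
  (forall a, mul (inv a) a = e) /\ (forall a, mul a (inv a) = e).

Definition ltrans (G : countType) (mul : G -> G -> G) (g : G) (F : {fset G}) : {fset G} :=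
  [fset mul g x | x in F]%fset.

Definition is_Folner (R : realType) (G : countType) (mul : G -> G -> G)
    (F : nat -> {fset G}) : Prop :=
  (forall n, F n != fset0%fset) /\
  (forall g : G,
     (fun n => (#|` ((ltrans mul g (F n) `\` F n) `|` (F n `\` ltrans mul g (F n)))%fset|)%:R
               / (#|` F n|)%:R : R) @ \oo --> 0).

Definition is_metric (R : realType) (X : Type) (d : X -> X -> R) : Prop :=
  (forall x y, 0 <= d x y) /\ (forall x y, d x y = 0 <-> x = y) /\
  (forall x y, d x y = d y x) /\ (forall x y z, d x z <= d x y + d y z).

Definition d_open (R : realType) (X : Type) (d : X -> X -> R) (U : set X) : Prop :=
  forall x, U x -> exists2 r : R, 0 < r & (forall y, d x y < r -> U y).

Definition d_compact (R : realType) (X : Type) (d : X -> X -> R) : Prop :=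
  forall (I : Type) (U : I -> set X), (forall i, d_open d (U i)) ->
    (forall x, exists i, U i x) ->
    exists s : seq I, forall x, exists2 i, Stdlib.Lists.List.In i s & U i x.

Definition d_continuous (R : realType) (X : Type) (d : X -> X -> R) (f : X -> X) : Prop :=
  forall x (eps : R), 0 < eps -> exists2 delta : R, 0 < delta &
    forall y, d x y < delta -> d (f x) (f y) < eps.

Definition is_Gsystem (R : realType) (G : countType) (mul : G -> G -> G) (e : G)
    (X : Type) (d : X -> X -> R) (act : G -> X -> X) : Prop :=
  is_metric d /\ d_compact d /\
  (forall x, act e x = x) /\ (forall g h x, act (mul g h) x = act g (act h x)) /\
  (forall g, d_continuous d (act g)).

(* diam = rho (the diameter of a compact metric space is attained) *)
Definition is_diameter (R : realType) (X : Type) (d : X -> X -> R) (rho : R) : Prop :=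
  (forall x y, d x y <= rho) /\ (exists x y, d x y = rho).

Definition in_A (R : realType) (rho : R) (zeta : R -> R) : Prop :=
  {within `[0, rho], continuous zeta} /\
  (forall s t, 0 <= s -> s <= t -> t <= rho -> zeta s <= zeta t) /\
  (forall s t, 0 <= s -> 0 <= t -> s + t <= rho -> zeta (s + t) <= zeta s + zeta t) /\
  (forall t, 0 <= t -> t <= rho -> 0 <= zeta t) /\
  (forall t, 0 <= t -> t <= rho -> zeta t = 0 -> t = 0) /\ zeta 0 = 0.

Local Open Scope ereal_scope.

Definition limsup0 (R : realType) (h : R -> \bar R) : \bar R :=
  ereal_inf [set ereal_sup [set h eps | eps in [set eps : R | (0 < eps < delta)%R]]
            | delta in [set delta : R | (0 < delta)%R]].
Definition liminf0 (R : realType) (h : R -> \bar R) : \bar R :=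
  ereal_sup [set ereal_inf [set h eps | eps in [set eps : R | (0 < eps < delta)%R]]
            | delta in [set delta : R | (0 < delta)%R]].

Definition limsupn (R : realType) (u : nat -> \bar R) : \bar R :=
  ereal_inf [set ereal_sup [set u n | n in [set n : nat | (N <= n)%N]] | N in [set: nat]].

Definition k_m (R : realType) (zeta : R -> R) : \bar R :=
  liminf0 (fun eps : R => (ln (zeta eps) / ln eps)%:E).
Definition k_M (R : realType) (zeta : R -> R) : \bar R :=
  limsup0 (fun eps : R => (ln (zeta eps) / ln eps)%:E).

Definition dist_F (R : realType) (G : countType) (X : Type) (act : G -> X -> X)
    (rho' : X -> X -> R) (F : {fset G}) (x y : X) : R :=
  \big[Num.max/0%R]_(g <- F) rho' (act g x) (act g y).

Definition sep_num (R : realType) (G : countType) (X : Type) (act : G -> X -> X)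
    (rho' : X -> X -> R) (F : {fset G}) (eps : R) : \bar R :=
  ereal_sup [set ((size s)%:R)%:E | s in
     [set s : seq X | pairwise (fun x y => `[< (eps < dist_F act rho' F x y)%R >]) s]].

Definition sep_rate (R : realType) (G : countType) (X : Type) (act : G -> X -> X)
    (rho' : X -> X -> R) (F : nat -> {fset G}) (eps : R) : \bar R :=
  limsupn (fun n => (ln (fine (sep_num act rho' (F n) eps)) / (#|` F n|)%:R)%:E).

Definition upper_mdim_M (R : realType) (G : countType) (X : Type) (act : G -> X -> X)
    (rho' : X -> X -> R) (F : nat -> {fset G}) : \bar R :=
  limsup0 (fun eps : R => sep_rate act rho' F eps * ((`|ln eps|)^-1)%:E).
Definition lower_mdim_M (R : realType) (G : countType) (X : Type) (act : G -> X -> X)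
    (rho' : X -> X -> R) (F : nat -> {fset G}) : \bar R :=
  liminf0 (fun eps : R => sep_rate act rho' F eps * ((`|ln eps|)^-1)%:E).

(* Main.v *)
Require Import Defs.
From HB Require Import structures.
From mathcomp Require Import all_boot all_order all_algebra.
From mathcomp Require Import finmap.
From mathcomp Require Import all_classical all_reals all_analysis.
From mathcomp Require Import lra ring.
Import Order.TTheory GRing.Theory Num.Theory numFieldNormedType.Exports.
Local Open Scope classical_set_scope.
Local Open Scope ring_scope.
Local Open Scope ereal_scope.
Set Implicit Arguments. Unset Strict Implicit. Unset Printing Implicit Defensive.
Lemma limsup0_le (R : realType) (h : R -> \bar R) (y : \bar R) (dl : R) :
  (0 < dl)%R -> (forall eps, (0 < eps)%R -> (eps < dl)%R -> h eps <= y) -> limsup0 h <= y.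
Proof.
move=> d0 H.
apply: (@le_trans _ _ (ereal_sup [set h eps | eps in [set eps : R | (0 < eps < dl)%R]])).
  by apply: ereal_inf_lbound; exists dl.
by apply: ge_ereal_sup => _ [eps /andP[e0 ed] <-]; exact: H.
Qed.

Lemma limsup0_lt (R : realType) (h : R -> \bar R) (y : \bar R) :
  limsup0 h < y -> exists2 dl : R, (0 < dl)%R &
    forall eps, (0 < eps)%R -> (eps < dl)%R -> h eps < y.
Proof.
move/ereal_inf_lt => [_ [dl /= d0 <-] Hlt]; exists dl => // eps e0 ed.
apply: le_lt_trans Hlt; apply: ereal_sup_ubound; by exists eps; rewrite //= e0 ed.
Qed.

Lemma limsup0_ge (R : realType) (h : R -> \bar R) (y : \bar R) :
  (forall dl, (0 < dl)%R -> exists2 eps, (0 < eps < dl)%R & y <= h eps) -> y <= limsup0 h.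
Proof.
move=> H; apply: le_ereal_inf_tmp => _ [dl /= d0 <-].
have [eps ed hy] := H dl d0; apply: (le_trans hy); apply: ereal_sup_ubound; by exists eps.
Qed.

Lemma le_liminf0 (R : realType) (h : R -> \bar R) (y : \bar R) (dl : R) :
  (0 < dl)%R -> (forall eps, (0 < eps)%R -> (eps < dl)%R -> y <= h eps) -> y <= liminf0 h.
Proof.
move=> d0 H.
apply: (@le_trans _ _ (ereal_inf [set h eps | eps in [set eps : R | (0 < eps < dl)%R]])).
  by apply: le_ereal_inf_tmp => _ [eps /andP[e0 ed] <-]; exact: H.
by apply: ereal_sup_ubound; exists dl.
Qed.

Lemma liminf0_le (R : realType) (h : R -> \bar R) (y : \bar R) :
  (forall dl, (0 < dl)%R -> exists2 eps, (0 < eps < dl)%R & h eps <= y) -> liminf0 h <= y.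
Proof.
move=> H; apply: ge_ereal_sup => _ [dl /= d0 <-].
have [eps ed hy] := H dl d0; apply: le_trans hy; apply: ereal_inf_lbound; by exists eps.
Qed.
Lemma sup_mul_le (R : realType) (A B : set \bar R) (M : \bar R) :
  0 <= M -> 0 <= ereal_sup B ->
  (forall x y, A x -> B y -> 0 <= x -> x * y <= M) ->
  ereal_sup A * ereal_sup B <= M.
Proof.
move=> M0 sB0 H.
have step1 : forall x, A x -> 0 <= x -> x * ereal_sup B <= M.
  move=> x Ax x0.
  have [sBe|sBgt] := leP (ereal_sup B) 0.
    by apply: le_trans M0; apply: mule_ge0_le0.
  have [y By y0] := ereal_sup_gt sBgt.
  case: x Ax x0 => [r| |] Ax x0.
  - have [r0|r0] := leP r 0%R.
      have -> : r = 0%R by apply/eqP; rewrite eq_le r0 -lee_fin.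
      by rewrite mul0e.
    rewrite -lee_pdivlMl //; apply: ge_ereal_sup => z Bz.
    rewrite lee_pdivlMl //; exact: H.
  - have := H _ _ Ax By x0; rewrite gt0_mulye // leye_eq => /eqP ->; exact: leey.
  - by [].
have [sAe|sAgt] := leP (ereal_sup A) 0.
  by apply: le_trans M0; apply: mule_le0_ge0.
have [x Ax x0] := ereal_sup_gt sAgt.
case sBE : (ereal_sup B) sB0 => [s| |] sB0.
- have [s0|s0] := leP s 0%R.
    have -> : s = 0%R by apply/eqP; rewrite eq_le s0 -lee_fin.
    by rewrite mule0.
  rewrite -lee_pdivlMr //; apply: ge_ereal_sup => z Az.
  have [z0|z0] := leP z 0.
    apply: le_trans z0 _; apply: mule_ge0 => //; rewrite lee_fin invr_ge0; exact: ltW.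
  rewrite lee_pdivlMr // -sBE; apply: step1 => //; exact: ltW.
- have := step1 _ Ax (ltW x0); rewrite sBE gt0_muley //.
  by rewrite leye_eq => /eqP ->; exact: leey.
- by [].
Qed.
Lemma all_filterS (T : Type) (a p : pred T) (s : seq T) : all a s -> all a (seq.filter p s).
Proof. by elim: s => //= y s IH /andP[ay Hs]; case: (p y) => /=; rewrite ?ay IH. Qed.

Lemma pw_filter (T : Type) (r : rel T) (p : pred T) (s : seq T) :
  pairwise r s -> pairwise r (seq.filter p s).
Proof.
elim: s => //= x s IH /andP[Hx Hs]; case: (p x) => /=; last exact: IH.
by rewrite IH // andbT all_filterS.
Qed.

Lemma sep_num_mono (R : realType) (G : countType) (X : Type) (act : G -> X -> X)
   (r1 r2 : X -> X -> R) (F1 F2 : {fset G}) (e1 e2 : R) :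
  (forall x y, (e1 < dist_F act r1 F1 x y)%R -> (e2 < dist_F act r2 F2 x y)%R) ->
  sep_num act r1 F1 e1 <= sep_num act r2 F2 e2.
Proof.
move=> Himp; apply: le_ereal_sup => _ [s Hs <-]; exists s => //.
move: Hs; rewrite /=; apply: sub_pairwise => x y /asboolP H; apply/asboolP; exact: Himp.
Qed.

Lemma sep_num_ge1 (R : realType) (G : countType) (X : Type) (act : G -> X -> X)
   (r1 : X -> X -> R) (F1 : {fset G}) (e1 : R) (x : X) :
  1 <= sep_num act r1 F1 e1.
Proof. by apply: ereal_sup_ubound; exists [:: x]. Qed.

Lemma sep_num_le1 (R : realType) (G : countType) (X : Type) (act : G -> X -> X)
   (r1 : X -> X -> R) (F1 : {fset G}) (e1 : R) :
  (forall x y, ~ (e1 < dist_F act r1 F1 x y)%R) -> sep_num act r1 F1 e1 <= 1.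
Proof.
move=> H; apply: ge_ereal_sup => _ [s Hs <-].
case: s Hs => [|x [|y t]] //=; first by rewrite lee_fin ler01.
by move=> /andP[/andP[/asboolP /H]].
Qed.

Lemma fin_min (T : eqType) (R : realType) (P : T -> R -> Prop) (s : seq T) :
  (forall t r r', (0 < r')%R -> (r' <= r)%R -> P t r -> P t r') ->
  (forall t, t \in s -> exists2 r, (0 < r)%R & P t r) ->
  exists2 r, (0 < r)%R & forall t, t \in s -> P t r.
Proof.
move=> Pmono; elim: s => [|a s IH] H; first by exists 1%R.
have [ra ra0 Pa] := H a (mem_head _ _).
have [rs rs0 Ps] : exists2 r, (0 < r)%R & forall t, t \in s -> P t r.
  by apply: IH => t ts; apply: H; rewrite in_cons ts orbT.
exists (Num.min ra rs); first by rewrite lt_min ra0 rs0.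
move=> t; rewrite in_cons => /orP[/eqP -> | ts].
  by apply: Pmono Pa; rewrite ?lt_min ?ra0 ?rs0 // ge_min lexx.
by apply: (Pmono _ rs); rewrite ?lt_min ?ra0 ?rs0 ?ge_min ?lexx ?orbT //; exact: Ps.
Qed.
Lemma all_filter_imp (T : Type) (a b q : pred T) (s : seq T) :
  (forall x, a x -> q x -> b x) -> all a s -> all b (seq.filter q s).
Proof.
move=> H; elim: s => //= y s IH /andP[ay Hs].
by case qy: (q y) => /=; rewrite IH // andbT; exact: H.
Qed.

Lemma all_filter_self (T : Type) (q : pred T) (s : seq T) : all q (seq.filter q s).
Proof. by elim: s => //= y s IH; case qy: (q y) => /=; rewrite ?qy IH. Qed.

Lemma all_true (T : Type) (q : pred T) (s : seq T) : (forall x, q x) -> all q s.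
Proof. by move=> H; elim: s => //= y s ->; rewrite H. Qed.

Lemma sep_num_fin (R : realType) (G : countType) (X : Type) (act : G -> X -> X)
   (d : X -> X -> R) (F : {fset G}) (eps : R) :
  is_metric d -> d_compact d -> (forall g, d_continuous d (act g)) -> (0 < eps)%R ->
  exists N : nat, sep_num act d F eps <= N%:R%:E.
Proof.
move=> [d0 [d_eq [d_sym d_tri]]] dcomp dcont eps0.
pose U := fun x y : X => forall g, g \in F ->
   (d (act g x) (act g y) < eps / 2)%R.
have Uopen : forall x, d_open d (U x).
  move=> x y Uy.
  have [r r0 Hr] := @fin_min G R (fun g r => forall z, (d y z < r)%R ->
      (d (act g y) (act g z) < eps/2 - d (act g x) (act g y))%R) F
    (fun t r r' r'0 r'r P z hz => P z (lt_le_trans hz r'r))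
    (fun g gF => dcont g y (eps/2 - d (act g x) (act g y))%R
       (ltac:(by rewrite subr_gt0; exact: Uy g gF))).
  exists r => // z hz g gF.
  apply: (le_lt_trans (d_tri _ (act g y) _)).
  by rewrite -ltrBrDl; apply: Hr.
have cover : forall x, exists i, U i x.
  move=> x; exists x => g _; have -> : d (act g x) (act g x) = 0%R by apply/d_eq.
  by rewrite divr_gt0.
have [cs Hcs] := dcomp X U Uopen cover.
have claim : forall (cs : seq X) (s : seq X),
    pairwise (fun x y => `[< (eps < dist_F act d F x y)%R >]) s ->
    all (fun x => `[< exists2 i, List.In i cs & U i x >]) s -> (size s <= size cs)%N.
  elim=> [|c cs' IH] s Hs Hall.
    by case: s Hs Hall => //= x s _ /andP[/asboolP [i []]].
  pose p := fun x => `[< U c x >].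
  rewrite -(count_predC p s) -!size_filter /= -add1n; apply: leq_add.
    have := @pw_filter _ _ p _ Hs; have := @all_filter_self _ p s.
    case: (seq.filter p s) => [|x [|y t]] //= /and3P[/asboolP Ux /asboolP Uy _].
    move=> /andP[/andP[/asboolP Hxy _] _]; exfalso; move: Hxy; apply/negP.
    rewrite -leNgt /dist_F big_seq; apply: bigmax_le; first exact: ltW.
    move=> g gF; apply: ltW; apply: (le_lt_trans (d_tri _ (act g c) _)).
    rewrite (splitr eps); apply: ltrD; last exact: Uy.
    by rewrite d_sym; exact: Ux.
  apply: IH; first exact: pw_filter.
  apply: all_filter_imp Hall => x /asboolP [i [<-|iin] Ui] /=.
    by rewrite /p; move/asboolP: (Ui) => ->.
  by move=> _; apply/asboolP; exists i.
exists (size cs); apply: ge_ereal_sup => _ [s Hs <-].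
rewrite lee_fin ler_nat; apply: claim Hs _; apply: all_true => x.
by apply/asboolP; have [i] := Hcs x; exists i.
Qed.
Lemma limsupn_le (R : realType) (u v : nat -> \bar R) :
  (forall n, u n <= v n) -> limsupn u <= limsupn v.
Proof.
move=> H; apply: le_ereal_inf_tmp => _ [N _ <-].
apply: le_trans (ereal_inf_lbound _) _; first by exists N.
apply: ge_ereal_sup => _ [n nN <-]; apply: le_trans (H n) _.
by apply: ereal_sup_ubound; exists n.
Qed.

Lemma limsupn_ge0 (R : realType) (u : nat -> \bar R) :
  (forall n, 0 <= u n) -> 0 <= limsupn u.
Proof.
move=> H; apply: le_ereal_inf_tmp => _ [N _ <-].
by apply: le_trans (H N) _; apply: ereal_sup_ubound; exists N => //=.
Qed.

Lemma limsupn_le0 (R : realType) (u : nat -> \bar R) :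
  (forall n, u n <= 0) -> limsupn u <= 0.
Proof.
move=> H; apply: le_trans (ereal_inf_lbound _) _; first by exists 0%N.
by apply: ge_ereal_sup => _ [n _ <-].
Qed.

Lemma ln_fine_ge0 (R : realType) (s : \bar R) : 1 <= s -> (0 <= ln (fine s))%R.
Proof.
case: s => [r| |] //=; first by rewrite lee_fin => /ln_ge0.
by rewrite ln0.
Qed.

Lemma ln_fine_le (R : realType) (s1 s2 : \bar R) (N : nat) :
  1 <= s1 -> s1 <= s2 -> s2 <= N%:R%:E -> (ln (fine s1) <= ln (fine s2))%R.
Proof.
case: s1 => [r1| |]; case: s2 => [r2| |] //=; rewrite ?lee_fin => r1g r12 _.
have h1 : (0 < r1)%R := lt_le_trans ltr01 r1g.
have h2 : (0 < r2)%R := lt_le_trans h1 r12.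
by rewrite ler_ln ?posrE.
Qed.

Lemma sep_rate_ge0 (R : realType) (G : countType) (X : Type) (act : G -> X -> X)
   (r1 : X -> X -> R) (F : nat -> {fset G}) (e1 : R) (x : X) :
  0 <= sep_rate act r1 F e1.
Proof.
apply: limsupn_ge0 => n; rewrite lee_fin divr_ge0 //.
exact/ln_fine_ge0/sep_num_ge1.
Qed.

Lemma sep_rate_le0 (R : realType) (G : countType) (X : Type) (act : G -> X -> X)
   (r1 : X -> X -> R) (F : nat -> {fset G}) (e1 : R) :
  (forall n, sep_num act r1 (F n) e1 <= 1) -> sep_rate act r1 F e1 <= 0.
Proof.
move=> H; apply: limsupn_le0 => n; rewrite lee_fin.
apply: mulr_le0_ge0; last by rewrite invr_ge0.
by apply: ln_le0; move: (H n); case: (sep_num _ _ _ _) => [r| |] //=.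
Qed.

Lemma sep_rate_le (R : realType) (G : countType) (X : Type) (act : G -> X -> X)
   (r1 r2 : X -> X -> R) (F : nat -> {fset G}) (e1 e2 : R) (x : X) :
  (forall n, sep_num act r1 (F n) e1 <= sep_num act r2 (F n) e2) ->
  (forall n, exists N : nat, sep_num act r2 (F n) e2 <= N%:R%:E) ->
  sep_rate act r1 F e1 <= sep_rate act r2 F e2.
Proof.
move=> H Hf; apply: limsupn_le => n; rewrite lee_fin.
apply: ler_wpM2r; first by rewrite invr_ge0.
have [N HN] := Hf n; apply: (@ln_fine_le _ _ _ N) => //; exact: sep_num_ge1.
Qed.
Lemma zeta_cont0 (R : realType) (rho : R) (zeta : R -> R) :
  in_A rho zeta -> (0 <= rho)%R ->
  forall c : R, (0 < c)%R -> exists2 eta : R, (0 < eta)%R &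
    forall t, (0 <= t)%R -> (t < eta)%R -> (t <= rho)%R -> (zeta t < c)%R.
Proof.
move=> [zc [_ [_ [_ [_ z0]]]]] rho0 c c0.
have h0 : [set` `[0%R, rho]] (0%R : R) by rewrite /= in_itv /= lexx rho0.
have := (proj1 (@subspace_continuousP _ _ _ zeta) zc) 0%R h0.
move=> /cvgr_dist_lt /(_ c c0).
rewrite near_withinE => /nbhs_ballP [eta /= eta0 Heta].
exists eta => // t t0 te tr.
have := Heta t.
rewrite z0 sub0r normrN => H; apply: le_lt_trans (ler_norm _) _; apply: H.
  by rewrite /ball /= sub0r normrN ger0_norm.
by rewrite in_itv /= t0 tr.
Qed.
Lemma zeta_lower (R : realType) (rho : R) (zeta : R -> R) :
  in_A rho zeta -> (0 < rho)%R ->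
  forall eps, (0 < eps)%R -> (eps <= rho)%R ->
  (zeta rho / (2 * rho) * eps <= zeta eps)%R.
Proof.
move=> [_ [zmono [zsub [zpos [_ z0]]]]] rho0 eps e0 er.
have mult : forall m : nat, (m%:R * eps <= rho)%R -> (zeta (m%:R * eps) <= m%:R * zeta eps)%R.
  elim=> [|m IH] h; first by rewrite !mul0r z0.
  rewrite -addn1 natrD mulrDl !mul1r.
  have hm : (m%:R * eps <= rho)%R.
    by apply: le_trans h; rewrite -addn1 natrD mulrDl mul1r lerDl ltW.
  have hs : (zeta (m%:R * eps + eps) <= zeta (m%:R * eps) + zeta eps)%R.
    apply: zsub; first by rewrite mulr_ge0 // ltW.
      exact: ltW.
    by move: h; rewrite -addn1 natrD mulrDl mul1r.
  by apply: le_trans hs _; rewrite mulrDl mul1r; apply: lerD (IH hm) (lexx _).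
have := trunc_itv (divr_ge0 (ltW rho0) (ltW e0)).
set n := Num.trunc _ => /andP[n1 n2].
have hn : (n%:R * eps <= rho)%R by rewrite -ler_pdivlMr.
have hn2 : (rho < n.+1%:R * eps)%R by rewrite -ltr_pdivrMr.
have hz := mult n hn.
have zr : (zeta rho <= n%:R * zeta eps + zeta eps)%R.
  have -> : rho = (n%:R * eps + (rho - n%:R * eps))%R by rewrite addrC subrK.
  have hs : (zeta (n%:R * eps + (rho - n%:R * eps)) <= zeta (n%:R * eps) + zeta (rho - n%:R * eps))%R.
    apply: zsub; first by rewrite mulr_ge0 // ltW.
      by rewrite subr_ge0.
    by rewrite addrC subrK.
  apply: le_trans hs _; apply: lerD; first exact: hz.
    apply: zmono; first by rewrite subr_ge0.
      by rewrite lerBlDr; move: hn2; rewrite -addn1 natrD mulrDl mul1r addrC => /ltW.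
    exact: er.
have ze0 : (0 <= zeta eps)%R by apply: zpos => //; exact: ltW.
rewrite mulrAC ler_pdivrMr; last by rewrite mulr_gt0.
have n0 : (0 <= n%:R :> R)%R by [].
nra.
Qed.
Lemma bigmax_gt_ex (R : realType) (G : countType) (F : {fset G}) (f : G -> R) (e : R) :
  (0 <= e)%R -> (e < \big[Num.max/0%R]_(g <- F) f g)%R -> exists2 g, g \in F & (e < f g)%R.
Proof.
move=> e0 H; have [//|Hno] := pselect (exists2 g, g \in F & (e < f g)%R).
exfalso; move: H; apply/negP; rewrite -leNgt big_seq; apply: bigmax_le => // g gF.
by rewrite leNgt; apply/negP => egt; apply: Hno; exists g.
Qed.
Arguments bigmax_gt_ex {R G F f e}.

Lemma le_distF (R : realType) (G : countType) (X : Type) (act : G -> X -> X)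
   (r : X -> X -> R) (F : {fset G}) x y g :
  g \in F -> (r (act g x) (act g y) <= dist_F act r F x y)%R.
Proof. by move=> gF; rewrite /dist_F; apply: (le_bigmax_seq 0%R g). Qed.
Arguments le_distF {R G X act r F x y g}.

Lemma sepI1 (R : realType) (G : countType) (X : Type) (act : G -> X -> X)
   (d : X -> X -> R) (F : {fset G}) (rho : R) (zeta : R -> R) (eps : R) x y :
  in_A rho zeta -> (forall x y, 0 <= d x y)%R -> (0 <= eps)%R -> (eps <= rho)%R ->
  (zeta eps < dist_F act (fun x y => zeta (d x y)) F x y)%R ->
  (eps < dist_F act d F x y)%R.
Proof.
move=> [_ [zmono [_ [zpos _]]]] d0 e0 er H.
have [g gF Hg] := bigmax_gt_ex (zpos _ e0 er) H.
rewrite ltNge; apply/negP => Hle.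
have : (zeta (d (act g x) (act g y)) <= zeta eps)%R.
  apply: zmono => //; apply: le_trans Hle; exact: le_distF.
by rewrite leNgt Hg.
Qed.

Lemma sepI2 (R : realType) (G : countType) (X : Type) (act : G -> X -> X)
   (d : X -> X -> R) (F : {fset G}) (rho : R) (zeta : R -> R) (eps c : R) x y :
  in_A rho zeta -> (forall x y, 0 <= d x y)%R -> (forall x y, d x y <= rho)%R ->
  (0 <= eps)%R -> (c < zeta eps)%R ->
  (eps < dist_F act d F x y)%R ->
  (c < dist_F act (fun x y => zeta (d x y)) F x y)%R.
Proof.
move=> [_ [zmono _]] d0 dr e0 cz H.
have [g gF Hg] := bigmax_gt_ex e0 H.
apply: lt_le_trans cz _; apply: le_trans (le_distF gF).
by apply: zmono => //; exact: ltW.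
Qed.

Lemma sepI3 (R : realType) (G : countType) (X : Type) (act : G -> X -> X)
   (d : X -> X -> R) (rho : R) (zeta : R -> R) (c : R) :
  in_A rho zeta -> (forall x y, 0 <= d x y)%R -> (forall x y, d x y <= rho)%R ->
  (0 <= rho)%R -> (0 < c)%R ->
  exists2 dl : R, (0 < dl)%R & forall F x y,
  (c < dist_F act (fun x y => zeta (d x y)) F x y)%R -> (dl < dist_F act d F x y)%R.
Proof.
move=> HA d0 dr rho0 c0.
have [eta eta0 Heta] := zeta_cont0 HA rho0 c0.
exists (eta / 2)%R; first by rewrite divr_gt0.
move=> F x y H.
have [g gF Hg] := bigmax_gt_ex (ltW c0) H.
apply: lt_le_trans (le_distF gF).
have : (eta <= d (act g x) (act g y))%R.
  rewrite leNgt; apply/negP => hlt.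
  by have := Heta _ (d0 _ _) hlt (dr _ _); rewrite ltNge (ltW Hg).
by apply: lt_le_trans; rewrite ltr_pdivrMr // ltr_pMr // ltr1n.
Qed.
Lemma ratio_id (R : realType) (lc le : R) :
  (lc < 0)%R -> (le < 0)%R -> (lc / le * `|lc|^-1 = `|le|^-1)%R.
Proof.
move=> lc0 le0; rewrite !ltr0_norm //.
have h1 : lc != 0%R by rewrite lt_eqF.
have h2 : le != 0%R by rewrite lt_eqF.
by field; rewrite h1 h2.
Qed.

Lemma ratio_id2 (R : realType) (lc le : R) :
  (lc < 0)%R -> (le < 0)%R -> (`|lc|^-1 * (`|lc| / `|le|) = `|le|^-1)%R.
Proof.
move=> lc0 le0; rewrite !ltr0_norm //.
have h1 : lc != 0%R by rewrite lt_eqF.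
have h2 : le != 0%R by rewrite lt_eqF.
by field; rewrite h1 h2.
Qed.

Lemma ln_half (R : realType) (z : R) : (0 < z)%R -> ln (z / 2) = (ln z - ln 2)%R.
Proof. by move=> z0; rewrite lnM ?posrE ?invr_gt0 // lnV ?posrE. Qed.
Theorem mainTheorem14 (R : realType) (G : countType) (mul : G -> G -> G) (e : G)
    (inv : G -> G) (X : Type) (d : X -> X -> R) (act : G -> X -> X)
    (F : nat -> {fset G}) (rho : R) (zeta : R -> R) :
  is_group mul e inv ->
  is_Folner R mul F ->
  is_Gsystem mul e d act ->
  is_diameter d rho ->
  in_A rho zeta ->
  0 < k_m zeta -> 0 < k_M zeta ->
  let zeta_d := fun x y => zeta (d x y) in
  k_m zeta * lower_mdim_M act zeta_d F <= lower_mdim_M act d F /\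
  upper_mdim_M act d F <= k_M zeta * upper_mdim_M act zeta_d F.
Proof.
move=> _ _ [Hmet [Hcomp [_ [_ Hcont]]]] [Hdle [x0 [y0 Hxy0]]] HA Hkm HkM zeta_d.
have Hmet' := Hmet; case: Hmet' => [d0 [d_eq [d_sym d_tri]]].
have rho0 : (0 <= rho)%R by rewrite -Hxy0.
have HA' := HA; case: HA' => [_ [zmono [zsub [zpos [zpos0 z0]]]]].
pose ha := fun eps : R => sep_rate act d F eps * ((`|ln eps|)^-1)%:E.
pose hb := fun eps : R => sep_rate act zeta_d F eps * ((`|ln eps|)^-1)%:E.
have ha0 : forall eps, 0 <= ha eps.
  by move=> eps; apply: mule_ge0; [exact: sep_rate_ge0 x0 | rewrite lee_fin invr_ge0].
have hb0 : forall eps, 0 <= hb eps.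
  by move=> eps; apply: mule_ge0; [exact: sep_rate_ge0 x0 | rewrite lee_fin invr_ge0].
have Fa : forall eps, (0 < eps)%R -> forall n, exists N : nat,
    sep_num act d (F n) eps <= N%:R%:E.
  by move=> eps e0 n; exact: sep_num_fin Hmet Hcomp Hcont e0.
have Fb : forall c, (0 < c)%R -> forall n, exists N : nat,
    sep_num act zeta_d (F n) c <= N%:R%:E.
  move=> c c0 n; have [dl dl0 Hdl] := sepI3 act HA d0 Hdle rho0 c0.
  have [N HN] := Fa dl dl0 n; exists N; apply: le_trans HN.
  by apply: sep_num_mono => x y; exact: Hdl.
have [rhoz|rhop] : rho = 0%R \/ (0 < rho)%R.
  by move: rho0; rewrite le_eqVlt => /orP[/eqP <-|->]; [left|right].
- have dz : forall x y, d x y = 0%R.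
    by move=> x y; apply/eqP; rewrite eq_le d0 -rhoz Hdle.
  have sa1 : forall eps, (0 < eps)%R -> forall F', sep_num act d F' eps <= 1.
    move=> eps e0 F'; apply: sep_num_le1 => x y; apply/negP; rewrite -leNgt.
    rewrite /dist_F big_seq; apply: bigmax_le => [|g _]; first exact: ltW.
    by rewrite dz ltW.
  have sb1 : forall eps, (0 < eps)%R -> forall F', sep_num act zeta_d F' eps <= 1.
    move=> eps e0 F'; apply: sep_num_le1 => x y; apply/negP; rewrite -leNgt.
    rewrite /dist_F big_seq; apply: bigmax_le => [|g _]; first exact: ltW.
    by rewrite /zeta_d dz z0 ltW.
  have ha_le : forall eps, (0 < eps)%R -> ha eps <= 0.
    move=> eps e0; apply: mule_le0_ge0; last by rewrite lee_fin invr_ge0.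
    by apply: sep_rate_le0 => n; exact: sa1.
  have hb_le : forall eps, (0 < eps)%R -> hb eps <= 0.
    move=> eps e0; apply: mule_le0_ge0; last by rewrite lee_fin invr_ge0.
    by apply: sep_rate_le0 => n; exact: sb1.
  split.
    have L0 : liminf0 hb = 0.
      apply/eqP; rewrite eq_le; apply/andP; split.
        apply: liminf0_le => dl dl0; exists (dl / 2)%R; last by apply: hb_le; rewrite divr_gt0.
        by rewrite divr_gt0 //= ltr_pdivrMr // ltr_pMr // ltr1n.
      by apply: (@le_liminf0 _ hb 0 1%R ltr01) => eps _ _; exact: hb0.
    have -> : lower_mdim_M act zeta_d F = 0 by exact: L0.
    by rewrite mule0; apply: (@le_liminf0 _ ha 0 1%R ltr01) => eps _ _; exact: ha0.
  apply: (@le_trans _ _ 0).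
    by apply: (@limsup0_le _ ha 0 1%R ltr01) => eps e0 _; exact: ha_le.
  apply: mule_ge0; first exact: ltW.
  apply: limsup0_ge => dl dl0; exists (dl / 2)%R; last exact: hb0.
  by rewrite divr_gt0 //= ltr_pdivrMr // ltr_pMr // ltr1n.
- have zposS : forall t, (0 < t)%R -> (t <= rho)%R -> (0 < zeta t)%R.
    move=> t t0 tr; rewrite lt_neqAle zpos ?(ltW t0) // andbT.
    by apply/eqP => /esym /(zpos0 _ (ltW t0) tr) t00; move: t0; rewrite t00 ltxx.
  split.
  have L0 : 0 <= liminf0 hb by apply: (@le_liminf0 _ hb 0 1%R ltr01) => eps _ _; exact: hb0.
  have M0 : 0 <= liminf0 ha by apply: (@le_liminf0 _ _ _ 1%R) => // eps e0 _; exact: ha0.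
  rewrite /k_m /lower_mdim_M /liminf0.
  apply: sup_mul_le; [exact: M0 | exact: L0 |].
  move=> _ _ [dl1 dl10 <-] [dl2 dl20 <-] xpos.
  have [eta eta0 Heta] := zeta_cont0 HA rho0 (c := Num.min dl2 1%R) (ltac:(by rewrite lt_min dl20 ltr01)).
  apply: (@le_liminf0 _ _ _ (Num.min (Num.min dl1 eta) (Num.min rho 1%R))).
    by rewrite !lt_min dl10 eta0 rhop ltr01.
  move=> eps e0; rewrite !lt_min => /andP[/andP[e1 e2] /andP[e3 e4]].
  have ze := zposS eps e0 (ltW e3).
  have := Heta eps (ltW e0) e2 (ltW e3); rewrite lt_min => /andP[zd2 z1].
  have hx : ereal_inf [set (ln (zeta eps0) / ln eps0)%:E | eps0 in [set eps0 : R | (0 < eps0 < dl1)%R]]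
      <= (ln (zeta eps) / ln eps)%:E.
    by apply: ereal_inf_lbound; exists eps => //=; rewrite e0 e1.
  have hy : ereal_inf [set hb eps0 | eps0 in [set eps0 : R | (0 < eps0 < dl2)%R]] <= hb (zeta eps).
    by apply: ereal_inf_lbound; exists (zeta eps) => //=; rewrite ze zd2.
  have yp : 0 <= ereal_inf [set hb eps0 | eps0 in [set eps0 : R | (0 < eps0 < dl2)%R]].
    by apply: le_ereal_inf_tmp => _ [? _ <-]; exact: hb0.
  apply: le_trans (lee_pmul xpos yp hx hy) _.
  rewrite /hb /ha muleCA -EFinM ratio_id; first last.
  - by rewrite ln_lt0 // e0 e4.
  - by rewrite ln_lt0 // ze z1.
  apply: lee_wpmul2r; first by rewrite lee_fin invr_ge0.
  apply: (sep_rate_le x0); last exact: Fa.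
  move=> n; apply: sep_num_mono => x y.
  by apply: (sepI1 HA d0 (ltW e0) (ltW e3)).
  have -> : upper_mdim_M act zeta_d F = limsup0 hb by [].
  have -> : upper_mdim_M act d F = limsup0 ha by [].
  have haE : forall eps, ha eps = sep_rate act d F eps * ((`|ln eps|)^-1)%:E := fun _ => erefl.
  have hbE : forall eps, hb eps = sep_rate act zeta_d F eps * ((`|ln eps|)^-1)%:E := fun _ => erefl.
  clearbody ha hb.
  have L0 : 0 <= limsup0 hb.
    apply: limsup0_ge => dl dl0; exists (dl / 2)%R; last exact: hb0.
    by rewrite divr_gt0 //= ltr_pdivrMr // ltr_pMr // ltr1n.
  case LE : (limsup0 hb) L0 => [l| |] L0;
    [| by rewrite gt0_muley // leey | by move: L0; rewrite leeNy_eq].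
  pose r := fun eps : R => (ln (zeta eps) / ln eps)%:E.
  have -> : k_M zeta = limsup0 r by [].
  have zr := zposS rho rhop (lexx _).
  pose c0 := (zeta rho / (2 * rho))%R.
  have c00 : (0 < c0)%R by rewrite /c0 divr_gt0 // mulr_gt0.
  have K2 : limsup0 r <= 2%:E.
    apply: (@limsup0_le _ _ _ (Num.min (Num.min rho 1%R) c0)).
      by rewrite !lt_min rhop ltr01 c00.
    move=> eps e0; rewrite !lt_min => /andP[/andP[e3 e4] e5].
    have ze := zposS eps e0 (ltW e3).
    have hl := zeta_lower HA rhop e0 (ltW e3).
    have le0 : (ln eps < 0)%R by rewrite ln_lt0 // e0 e4.
    rewrite /r lee_fin ler_ndivrMr //.
    have h1 : (ln (c0 * eps) <= ln (zeta eps))%R.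
      have cpos : (0 < c0 * eps)%R by rewrite mulr_gt0.
      by rewrite ler_ln ?posrE.
    have h2 : (ln eps <= ln c0)%R by rewrite ler_ln ?posrE // ltW.
    rewrite lnM ?posrE // in h1; lra.
  have HkM' : 0 < limsup0 r by [].
  case KE : (limsup0 r) HkM' K2 => [k| |] HkM' K2 //.
  rewrite lte_fin in HkM'; rewrite lee_fin in L0.
  rewrite -EFinM; apply/lee_addgt0Pr => u u0.
  pose t := Num.min 1%R (u / (2 * l + k + 2))%R.
  have den0 : (0 < 2 * l + k + 2)%R by lra.
  have t0 : (0 < t)%R by rewrite /t lt_min ltr01 divr_gt0.
  have t1 : (t <= 1)%R by rewrite /t ge_min lexx.
  have tu : (t * (2 * l + k + 2) <= u)%R.
    by rewrite -ler_pdivlMr // /t ge_min lexx orbT.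
  have [dl1 dl10 H1] := @limsup0_lt _ r (k + t)%:E (ltac:(by rewrite KE lte_fin ltrDl)).
  have [dl2 dl20 H2] := @limsup0_lt _ hb (l + t)%:E (ltac:(by rewrite LE lte_fin ltrDl)).
  have [eta eta0 Heta] := zeta_cont0 HA rho0 (c := Num.min dl2 1%R) (ltac:(by rewrite lt_min dl20 ltr01)).
  pose dl3 := expR (- (ln 2 / t))%R.
  have ln20 : (0 < ln (2 : R))%R by rewrite ln_gt0 // ltr1n.
  apply: (@limsup0_le _ _ _ (Num.min (Num.min dl1 eta) (Num.min (Num.min rho 1%R) dl3))).
    by rewrite !lt_min dl10 eta0 rhop ltr01 expR_gt0.
  move=> eps e0; rewrite !lt_min => /andP[/andP[e1 e2] /andP[/andP[e3 e4] e5]].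
  have ze := zposS eps e0 (ltW e3).
  have := Heta eps (ltW e0) e2 (ltW e3); rewrite lt_min => /andP[zd2 z1].
  pose c := (zeta eps / 2)%R.
  have cz : (c < zeta eps)%R by rewrite /c ltr_pdivrMr // ltr_pMr // ltr1n.
  have c0' : (0 < c)%R by rewrite /c divr_gt0.
  have hab : sep_rate act d F eps <= sep_rate act zeta_d F c.
    apply: (sep_rate_le x0); last exact: Fb.
    move=> n; apply: sep_num_mono => x y.
    exact: (sepI2 HA d0 Hdle (ltW e0) cz).
  have hbc : hb c < (l + t)%:E by apply: H2 => //; apply: lt_trans cz zd2.
  have le0 : (ln eps < 0)%R by rewrite ln_lt0 // e0 e4.
  have lc0 : (ln c < 0)%R by rewrite ln_lt0 // c0' (lt_trans cz z1).
  rewrite haE; apply: le_trans (lee_wpmul2r _ hab) _; first by rewrite lee_fin invr_ge0.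
  have -> : sep_rate act zeta_d F c * ((`|ln eps|)^-1)%:E =
            hb c * ((`|ln c| / `|ln eps|)%R)%:E.
    by rewrite hbE -muleA -EFinM ratio_id2.
  have ratio_le : (`|ln c| / `|ln eps| <= k + 2 * t)%R.
    have r1 : (ln (zeta eps) / ln eps < k + t)%R by rewrite -lte_fin; exact: H1.
    have r2 : (ln 2 / (- ln eps) <= t)%R.
      have : (ln eps < ln dl3)%R by rewrite ltr_ln ?posrE ?expR_gt0.
      rewrite /dl3 expRK => h; rewrite ler_pdivrMr ?oppr_gt0 //.
      have : (ln 2 / t < - ln eps)%R by lra.
      by rewrite ltr_pdivrMr // => /ltW; rewrite mulrC.
    have -> : (`|ln c| / `|ln eps| = ln (zeta eps) / ln eps + ln 2 / (- ln eps))%R.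
      rewrite !ltr0_norm // /c ln_half //.
      have h1 : ln eps != 0%R by rewrite lt_eqF.
      by field; rewrite h1.
    lra.
  have ratio0 : (0 <= `|ln c| / `|ln eps|)%R by rewrite divr_ge0.
  apply: le_trans (lee_pmul (hb0 c) _ (ltW hbc) (_ : _ <= (k + 2 * t)%:E)) _.
  - by rewrite lee_fin.
  - by rewrite lee_fin.
  rewrite -EFinM -EFinD lee_fin; nra.
Qed.
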